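(* Let $R$ be a commutative ring with identity and $M$ a non-zero comultiplication $R$-module such that $G'(M)$ is non-null. Then $G'(M)$ is an empty graph (has no edges) if and only if $\mathrm{Min}(M)=\{S_1,S_2\}$ with $S_1\neq S_2$ and both $M/S_1$ and $M/S_2$ are finitely cogenerated uniform $R$-modules.
   Context: An $R$-module $M$ is a comultiplication module if for every submodule $N$ of $M$ there is an ideal $I$ of $R$ with $N=\mathrm{Ann}_M(I)$. A submodule $N$ of $M$ is large if $N\cap L\neq 0$ for every non-zero submodule $L$ of $M$. $\mathrm{Min}(M)$ is the set of minimal submodules of $M$. The large sum graph $G'(M)$ has as vertex set the set of all non-zero non-large submodules of $M$, and two distinct vertices $N,K$ are adjacent iff $N+K$ is non-large in $M$. A module is uniform if any two non-zero submodules have non-zero intersection; a module $X$ is finitely cogenerated if whenever a family of submodules of $X$ has zero intersection, some finite subfamily has zero intersection. *)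

(* Defs.v *)
From HB Require Import structures.
From mathcomp Require Import all_boot all_order all_algebra.
From Stdlib Require List.
Set Implicit Arguments. Unset Strict Implicit. Unset Printing Implicit Defensive.
Import GRing.Theory.
Local Open Scope ring_scope.

Section ModDefs.
Variable R : comNzRingType.

Definition same_set (T : Type) (A B : T -> Prop) : Prop := forall x, A x <-> B x.

Definition is_ideal (I : R -> Prop) : Prop :=
  [/\ I 0, (forall a b, I a -> I b -> I (a + b)) & (forall r a, I a -> I (r * a))].

Variable M : lmodType R.

Definition is_submod (N : M -> Prop) : Prop :=
  [/\ N 0, (forall x y, N x -> N y -> N (x + y)) & (forall (r : R) x, N x -> N (r *: x))].

Definition AnnM (I : R -> Prop) : M -> Prop := fun m => forall r, I r -> r *: m = 0.

Definition comultiplication_module : Prop :=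
  forall N, is_submod N -> exists I, is_ideal I /\ same_set N (AnnM I).

Definition nonzero_submod (N : M -> Prop) : Prop := exists x, N x /\ x <> 0.

Definition module_nonzero : Prop := exists x : M, x <> 0.

Definition large (N : M -> Prop) : Prop :=
  forall L, is_submod L -> nonzero_submod L -> exists x, [/\ N x, L x & x <> 0].

Definition sum_submod (N K : M -> Prop) : M -> Prop :=
  fun x => exists a b, [/\ N a, K b & x = a + b].

(* vertices of the large sum graph G'(M) *)
Definition lsg_vertex (N : M -> Prop) : Prop :=
  [/\ is_submod N, nonzero_submod N & ~ large N].

Definition lsg_adj (N K : M -> Prop) : Prop :=
  [/\ lsg_vertex N, lsg_vertex K, ~ same_set N K & ~ large (sum_submod N K)].

Definition lsg_nonnull : Prop := exists N, lsg_vertex N.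

Definition lsg_empty : Prop := forall N K, ~ lsg_adj N K.

Definition minimal_submod (S : M -> Prop) : Prop :=
  [/\ is_submod S, nonzero_submod S &
     forall L, is_submod L -> nonzero_submod L -> (forall x, L x -> S x) -> same_set L S].

Definition Min_is_pair (S1 S2 : M -> Prop) : Prop :=
  [/\ minimal_submod S1, minimal_submod S2, ~ same_set S1 S2 &
     forall S, minimal_submod S -> same_set S S1 \/ same_set S S2].

End ModDefs.

Section ModProps.
Variable R : comNzRingType.
Variable X : lmodType R.

Definition uniform_module : Prop :=
  forall N K : X -> Prop, is_submod N -> is_submod K ->
    nonzero_submod N -> nonzero_submod K -> exists x, [/\ N x, K x & x <> 0].

Definition fin_cogenerated : Prop :=
  forall (I : Type) (F : I -> X -> Prop), (forall i, is_submod (F i)) ->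
    (forall x, (forall i, F i x) -> x = 0) ->
    exists s : list I, forall x, (forall i, List.In i s -> F i x) -> x = 0.
End ModProps.

(* The quotient M/S is (up to isomorphism) a finitely cogenerated uniform module:
   there is a surjective R-linear map from M onto such a module with kernel S. *)
Definition quotient_fcg_uniform (R : comNzRingType) (M : lmodType R) (S : M -> Prop) : Prop :=
  exists (X : lmodType R) (f : {linear M -> X}),
    [/\ (forall y, exists x, f x = y), (forall x, S x <-> f x = 0),
        uniform_module X & fin_cogenerated X].

(* Main.v *)
Require Import Defs.
From HB Require Import structures.
From mathcomp Require Import all_boot all_order all_algebra.
From Stdlib Require Import Classical ClassicalEpsilon FunctionalExtensionality PropExtensionality ProofIrrelevance.
Set Implicit Arguments. Unset Strict Implicit. Unset Printing Implicit Defensive.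
Import GRing.Theory.
Local Open Scope ring_scope.

Section Quot.
Variables (R : comNzRingType) (M : lmodType R) (S : M -> Prop).
Hypothesis hS : is_submod S.

Lemma S0 : S 0. Proof. by case: hS. Qed.
Lemma SD x y : S x -> S y -> S (x + y). Proof. by case: hS => _ h _; apply: h. Qed.
Lemma SZ r x : S x -> S (r *: x). Proof. by case: hS => _ _ h; apply: h. Qed.
Lemma SN x : S x -> S (- x). Proof. by move=> h; rewrite -scaleN1r; apply: SZ. Qed.
Lemma SB x y : S x -> S y -> S (x - y). Proof. by move=> hx hy; apply: SD => //; apply: SN. Qed.

Definition canon (x : M) : M := epsilon (inhabits x) (fun y => S (x - y)).
Lemma canon_spec x : S (x - canon x).
Proof. apply: (epsilon_spec (inhabits x) (fun y => S (x - y))). exists x; rewrite subrr; exact: S0. Qed.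
Lemma canon_eq x y : S (x - y) -> canon x = canon y.
Proof.
move=> h; rewrite /canon.
suff -> : (fun z => S (x - z)) = (fun z => S (y - z)) by rewrite (proof_irrelevance _ (inhabits x) (inhabits y)).
apply: functional_extensionality => z; apply: propositional_extensionality; split=> hz.
  by have := SB hz h; rewrite opprB addrC addrA subrK.
by have := SD h hz; rewrite addrA subrK.
Qed.
Lemma canonK x : canon (canon x) = canon x.
Proof. apply: canon_eq; rewrite -opprB; apply: SN; exact: canon_spec. Qed.

Definition qT := {x : M | canon x == x}.
HB.instance Definition _ := Choice.on qT.

Definition pi (x : M) : qT := exist _ (canon x) (introT eqP (canonK x)).
Lemma piK (a : qT) : pi (val a) = a.
Proof. by apply: val_inj => /=; apply/eqP; exact: (valP a). Qed.
Lemma piP (a : qT) : exists x, a = pi x. Proof. by exists (val a); rewrite piK. Qed.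
Lemma pi_eq x y : pi x = pi y <-> S (x - y).
Proof.
split; last by move=> h; apply: val_inj => /=; apply: canon_eq.
move=> /(congr1 val) /= e.
have -> : x - y = (x - canon x) - (y - canon y) by rewrite e opprB addrA subrK.
by apply: SB; apply: canon_spec.
Qed.

Definition q0 := pi 0.
Definition qadd (a b : qT) := pi (val a + val b).
Definition qopp (a : qT) := pi (- val a).
Definition qscale r (a : qT) := pi (r *: val a).

Lemma piD x y : qadd (pi x) (pi y) = pi (x + y).
Proof.
apply/pi_eq => /=.
have -> : canon x + canon y - (x + y) = - ((x - canon x) + (y - canon y)).
  by rewrite [RHS]opprD !opprB opprD addrACA.
by apply/SN/SD; apply: canon_spec.
Qed.
Lemma piN x : qopp (pi x) = pi (- x).
Proof.
apply/pi_eq => /=.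
have -> : - canon x - - x = x - canon x by rewrite opprK addrC.
exact: canon_spec.
Qed.
Lemma piZ r x : qscale r (pi x) = pi (r *: x).
Proof.
apply/pi_eq => /=.
have -> : r *: canon x - r *: x = - (r *: (x - canon x)) by rewrite scalerBr opprB.
by apply/SN/SZ; exact: canon_spec.
Qed.

Lemma qaddA : associative qadd.
Proof. move=> a b c; case: (piP a) (piP b) (piP c) => x -> [y ->] [z ->]. by rewrite !piD addrA. Qed.
Lemma qaddC : commutative qadd.
Proof. move=> a b; case: (piP a) (piP b) => x -> [y ->]. by rewrite !piD addrC. Qed.
Lemma qadd0 : left_id q0 qadd.
Proof. move=> a; case: (piP a) => x ->. by rewrite /q0 piD add0r. Qed.
Lemma qaddN : left_inverse q0 qopp qadd.
Proof. move=> a; case: (piP a) => x ->. by rewrite piN piD addNr. Qed.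

HB.instance Definition _ := GRing.isZmodule.Build qT qaddA qaddC qadd0 qaddN.
Lemma qaddE (a b : qT) : a + b = qadd a b. Proof. by []. Qed.

Lemma qscaleA a b v : qscale a (qscale b v) = qscale (a * b) v.
Proof. case: (piP v) => x ->; by rewrite !piZ scalerA. Qed.
Lemma qscale1 : left_id 1 qscale.
Proof. move=> v; case: (piP v) => x ->; by rewrite piZ scale1r. Qed.
Lemma qscaleDr : right_distributive qscale +%R.
Proof. move=> a u v; case: (piP u) (piP v) => x -> [y ->]. have -> : pi x + pi y = pi (x + y) by rewrite qaddE piD.
  by rewrite !piZ qaddE piD scalerDr. Qed.
Lemma qscaleDl v : {morph qscale^~ v: a b / a + b}.
Proof. move=> a b; case: (piP v) => x ->. by rewrite qaddE !piZ piD scalerDl. Qed.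

HB.instance Definition _ := GRing.Zmodule_isLmodule.Build R qT qscaleA qscale1 qscaleDr qscaleDl.

Lemma pi_linear : linear pi.
Proof. move=> a x y. have -> : a *: pi x = qscale a (pi x) by [].
  rewrite piZ; exact: (esym (piD _ _)). Qed.
HB.instance Definition _ := GRing.isLinear.Build R M qT *:%R pi pi_linear.

Lemma pi_surj (y : qT) : exists x, pi x = y. Proof. by case: (piP y) => x ->; exists x. Qed.
Lemma pi_ker x : S x <-> pi x = 0.
Proof. have -> : (0 : qT) = pi 0 by []. rewrite pi_eq subr0. by []. Qed.

Definition piL : {linear M -> qT} := pi.
End Quot.

Section Main.
Variables (R : comNzRingType) (M : lmodType R).

Lemma inter_submod (A B : M -> Prop) : is_submod A -> is_submod B ->
  is_submod (fun x => A x /\ B x).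
Proof.
move=> hA hB; split; first by split; [exact: (S0 hA) | exact: (S0 hB)].
  by move=> x y [? ?] [? ?]; split; [exact: (SD hA) | exact: (SD hB)].
by move=> r x [? ?]; split; [exact: (SZ hA) | exact: (SZ hB)].
Qed.

Lemma sum_is_submod (N K : M -> Prop) : is_submod N -> is_submod K ->
  is_submod (sum_submod N K).
Proof.
move=> hN hK; split.
- by exists 0, 0; split; [exact: (S0 hN) | exact: (S0 hK) | rewrite addr0].
- move=> x y [a [b [Na Kb ->]]] [c [d [Nc Kd ->]]].
  by exists (a + c), (b + d); split; [exact: (SD hN) | exact: (SD hK) | rewrite addrACA].
- move=> r x [a [b [Na Kb ->]]].
  by exists (r *: a), (r *: b); split; [exact: (SZ hN) | exact: (SZ hK) | rewrite scalerDr].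
Qed.

Lemma large_mono (A B : M -> Prop) : large A -> (forall x, A x -> B x) -> large B.
Proof. move=> hA sub L hL nz; have [x [Ax Lx nx]] := hA L hL nz; exists x; split; auto. Qed.

Lemma not_large (N : M -> Prop) : ~ large N ->
  exists L, [/\ is_submod L, nonzero_submod L & forall x, N x -> L x -> x = 0].
Proof.
move=> nl; apply: NNPP => ne; apply: nl => L hL nz.
apply: NNPP => nx; apply: ne; exists L; split => // x Nx Lx.
by apply: NNPP => xnz; apply: nx; exists x; split.
Qed.

Lemma min_sub (S V : M -> Prop) x : minimal_submod S -> is_submod V -> V x -> S x -> x <> 0 ->
  forall y, S y -> V y.
Proof.
move=> [hS _ hmin] hV Vx Sx nx y Sy.
have nz : nonzero_submod (fun z => V z /\ S z) by exists x.
have e := hmin (fun z => V z /\ S z) (inter_submod hV hS) nz (fun z (h : V z /\ S z) => proj2 h).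
exact: (proj1 (proj2 (e y) Sy)).
Qed.

Lemma min_inter (A B : M -> Prop) x : minimal_submod A -> minimal_submod B ->
  A x -> B x -> x <> 0 -> same_set A B.
Proof.
move=> mA mB Ax Bx nx y; split => h.
  by apply: (min_sub mA _ Bx Ax nx) => //; case: mB.
by apply: (min_sub mB _ Ax Bx nx) => //; case: mA.
Qed.

Lemma comult_trick (N S1 S2 : M -> Prop) b c : comultiplication_module M ->
  is_submod N -> is_submod S1 -> is_submod S2 ->
  (forall x, S1 x -> S2 x -> x = 0) -> N (b + c) -> S1 b -> S2 c -> N b.
Proof.
move=> hc hN h1 h2 disj Nbc Sb Sc.
have [I [_ eI]] := hc N hN.
apply/eI => r Ir.
have := (proj1 (eI _) Nbc) r Ir; rewrite scalerDr => e.
have e' : r *: b = - (r *: c) by apply/eqP; rewrite -subr_eq0 opprK e.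
apply: disj; first by exact: (SZ h1).
by rewrite e'; apply: (SN h2); exact: (SZ h2).
Qed.

Lemma image_submod (X : lmodType R) (f : {linear M -> X}) (A : M -> Prop) :
  is_submod A -> is_submod (fun y => exists a, A a /\ f a = y).
Proof.
move=> hA; split.
- by exists 0; split; [exact: (S0 hA) | rewrite raddf0].
- move=> x y [a [Aa <-]] [b [Ab <-]]; exists (a + b); split; [exact: (SD hA) | by rewrite raddfD].
- move=> r x [a [Aa <-]]; exists (r *: a); split; [exact: (SZ hA) | by rewrite linearZ].
Qed.

Lemma unif_transfer (X : lmodType R) (f : {linear M -> X}) (A B : M -> Prop) :
  uniform_module X -> is_submod A -> is_submod B ->
  (exists a, A a /\ f a <> 0) -> (exists b, B b /\ f b <> 0) ->
  exists a b, [/\ A a, B b, f a = f b & f a <> 0].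
Proof.
move=> hu hA hB [a [Aa fa]] [b [Bb fb]].
have [y [[a' [Aa' <-]] [b' [Bb' e]] ny]] :=
  hu _ _ (image_submod f hA) (image_submod f hB)
     (ex_intro _ (f a) (conj (ex_intro _ a (conj Aa erefl)) fa))
     (ex_intro _ (f b) (conj (ex_intro _ b (conj Bb erefl)) fb)).
by exists a', b'; split.
Qed.

Lemma vert_eq (Sa V : M -> Prop) (X : lmodType R) (f : {linear M -> X}) :
  (forall x, Sa x <-> f x = 0) -> uniform_module X -> is_submod Sa ->
  lsg_vertex V -> (forall x, Sa x -> V x) -> same_set V Sa.
Proof.
move=> hk hu hSa [hV hnz hnl] sub x; split; last by apply: sub.
move=> Vx; apply: NNPP => nSx.
have fx : f x <> 0 by move=> e; apply: nSx; apply/hk.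
have [L [hL [l0 [Ll0 l0nz]] disj]] := not_large hnl.
have fl0 : f l0 <> 0.
  by move=> e; apply: l0nz; apply: disj => //; apply: sub; apply/hk.
have [a [l [Va Ll e fnz]]] := unif_transfer hu hV hL
  (ex_intro _ x (conj Vx fx)) (ex_intro _ l0 (conj Ll0 fl0)).
have Sal : Sa (a - l).
  apply/hk; rewrite raddfB; apply/eqP; rewrite subr_eq0; apply/eqP; exact: e.
have Vl : V l by have := SB hV Va (sub _ Sal); rewrite subKr.
have l0' := disj l Vl Ll.
by apply: fnz; rewrite e l0' raddf0.
Qed.

Section Back.
Variables (S1 S2 : M -> Prop) (X1 X2 : lmodType R)
  (f1 : {linear M -> X1}) (f2 : {linear M -> X2}).
Hypotheses (m1 : minimal_submod S1) (m2 : minimal_submod S2)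
  (ns : ~ same_set S1 S2)
  (k1 : forall x, S1 x <-> f1 x = 0) (k2 : forall x, S2 x <-> f2 x = 0)
  (u1 : uniform_module X1) (u2 : uniform_module X2)
  (hc : comultiplication_module M).

Lemma hS1 : is_submod S1. Proof. by case: m1. Qed.
Lemma hS2 : is_submod S2. Proof. by case: m2. Qed.

Lemma disj12 x : S1 x -> S2 x -> x = 0.
Proof. move=> a b; apply: NNPP => nx; apply: ns; exact: min_inter a b nx. Qed.

Lemma large12 : large (sum_submod S1 S2).
Proof.
move=> L hL [l0 [Ll0 l0nz]].
case: (classic (exists x, [/\ S1 x, L x & x <> 0])) => [[x [S1x Lx nx]]|no].
  exists x; split => //; exists x, 0; split; rewrite ?addr0 //; exact: (S0 hS2).
have fl0 : f1 l0 <> 0 by move=> e; apply: no; exists l0; split => //; apply/k1.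
have [s [Ss snz]] : nonzero_submod S2 by case: m2.
have fs : f1 s <> 0 by move=> e; apply: snz; apply: disj12 => //; apply/k1.
have [a [b [La Sb e fnz]]] := unif_transfer u1 hL hS2
  (ex_intro _ l0 (conj Ll0 fl0)) (ex_intro _ s (conj Ss fs)).
exists a; split => //.
  exists (a - b), b; split => //; last by rewrite subrK.
  by apply/k1; rewrite raddfB; apply/eqP; rewrite subr_eq0; apply/eqP; exact: e.
by move=> a0; apply: fnz; rewrite a0 raddf0.
Qed.

Lemma vert_contains V : lsg_vertex V ->
  (forall x, S1 x -> V x) \/ (forall x, S2 x -> V x).
Proof.
move=> [hV hnz _].
have [x [[b [c [Sb Sc ->]]] Vx nx]] := large12 hV hnz.
have Vb : V b := comult_trick hc hV hS1 hS2 disj12 Vx Sb Sc.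
have Vc : V c.
  by apply: (comult_trick hc hV hS2 hS1 (fun x a b => disj12 b a)) Sc Sb; rewrite addrC.
case: (classic (b = 0)) => [b0|bnz].
  right; apply: (min_sub m2 hV Vc Sc) => c0; apply: nx; by rewrite b0 c0 addr0.
by left; apply: (min_sub m1 hV Vb Sb).
Qed.

Lemma back_empty : lsg_empty M.
Proof.
move=> N K [[hN nzN _] [hK nzK _] nsame nl].
have hNK := sum_is_submod hN hK.
have nzNK : nonzero_submod (sum_submod N K).
  case: nzN => n [Nn nn]; exists n; split => //; exists n, 0; split; rewrite ?addr0 //.
  exact: (S0 hK).
have vNK : lsg_vertex (sum_submod N K) by split.
have subN : forall x, N x -> sum_submod N K x.
  by move=> x Nx; exists x, 0; split; rewrite ?addr0 //; exact: (S0 hK).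
have subK : forall x, K x -> sum_submod N K x.
  by move=> x Kx; exists 0, x; split; rewrite ?add0r //; exact: (S0 hN).
have gen : forall S, minimal_submod S -> same_set (sum_submod N K) S -> False.
  move=> S [_ _ mS] e; apply: nsame => y.
  have eN := mS N hN nzN (fun z Nz => proj1 (e z) (subN z Nz)).
  have eK := mS K hK nzK (fun z Kz => proj1 (e z) (subK z Kz)).
  by rewrite eN eK.
case: (vert_contains vNK) => sub.
  by apply: (gen S1 m1); apply: (vert_eq k1 u1 hS1 vNK sub).
by apply: (gen S2 m2); apply: (vert_eq k2 u2 hS2 vNK sub).
Qed.
End Back.

Lemma vert_min (V : M -> Prop) : lsg_empty M -> lsg_vertex V -> minimal_submod V.
Proof.
move=> emp [hV nz nl]; split => // L hL nzL sub.
apply: NNPP => ns; apply: (emp L V); split => //.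
- by split => // lg; apply: nl; apply: large_mono lg sub.
- move=> lg; apply: nl; apply: large_mono lg _.
  by move=> x [a [b [La Vb ->]]]; apply: (SD hV) => //; apply: sub.
Qed.

Lemma quot_ok (Sa Sb : M -> Prop) (X : lmodType R) (f : {linear M -> X}) :
  lsg_empty M -> minimal_submod Sa -> minimal_submod Sb ->
  (forall x, Sa x -> Sb x -> x = 0) ->
  (forall y, exists x, f x = y) -> (forall x, Sa x <-> f x = 0) ->
  uniform_module X /\ fin_cogenerated X.
Proof.
move=> emp ma mb disj surj ker.
have [hSa [sa [Ssa sanz]] _] := ma.
have [hSb [sb [Ssb sbnz]] _] := mb.
have y0nz : f sb <> 0 by move=> e; apply: sbnz; apply: disj => //; apply/ker.
have key : forall K, is_submod K -> nonzero_submod K -> K (f sb).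
  move=> K hK [y [Ky ynz]]; have [x ex] := surj y; subst y.
  have hG : is_submod (fun z => K (f z)).
    split; first by rewrite raddf0; exact: (S0 hK).
      by move=> a b Ka Kb; rewrite raddfD; exact: (SD hK).
    by move=> r a Ka; rewrite linearZ; exact: (SZ hK).
  have xnz : x <> 0 by move=> x0; apply: ynz; rewrite x0 raddf0.
  have lg : large (fun z => K (f z)).
    apply: NNPP => nl.
    have vG : lsg_vertex (fun z => K (f z)) by split => //; exists x.
    have [_ _ mG] := vert_min emp vG.
    have nzSa : nonzero_submod Sa by exists sa.
    have e := mG Sa hSa nzSa (fun z Sz => eq_ind_r K (S0 hK) (proj1 (ker z) Sz)).
    by apply: ynz; apply/ker; apply/(e x).
  have [z [Gz Sz znz]] := lg Sb hSb (ex_intro _ sb (conj Ssb sbnz)).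
  exact: (min_sub mb hG Gz Sz znz).
split.
  move=> N K hN hK nN nK; exists (f sb); split => //; exact: key.
move=> I F hF hint.
case: (classic (exists i, forall x, F i x -> x = 0)) => [[i hi]|no].
  by exists [:: i] => x h; apply: hi; apply: h; left.
exfalso; apply: y0nz; apply: hint => i; apply: key => //.
apply: NNPP => nn; apply: no; exists i => x Fx.
by apply: NNPP => xnz; apply: nn; exists x; split.
Qed.

End Main.

Theorem theorem2p5 (R : comNzRingType) (M : lmodType R) :
  module_nonzero M -> comultiplication_module M -> lsg_nonnull M ->
  (lsg_empty M <->
   exists S1 S2 : M -> Prop,
     [/\ Min_is_pair S1 S2, quotient_fcg_uniform S1 & quotient_fcg_uniform S2]).
Proof.
move=> _ hc [N0 vN0]; split.
- move=> emp.
  have m1 := vert_min emp vN0.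
  have [hN0 [n0 [Nn0 n0nz]] nl0] := vN0.
  have [L [hL nzL disj]] := not_large nl0.
  have vL : lsg_vertex L.
    split => // lg; have [x [Lx Nx nx]] := lg N0 hN0 (ex_intro _ n0 (conj Nn0 n0nz)).
    by apply: nx; apply: disj.
  have m2 := vert_min emp vL.
  have disj' : forall x, L x -> N0 x -> x = 0 by move=> x a b; apply: disj.
  have nsame : ~ same_set N0 L by move=> e; apply: n0nz; apply: disj => //; apply/e.
  have lg : large (sum_submod N0 L).
    by apply: NNPP => nl; apply: (emp N0 L); split.
  exists N0, L; split.
  + split => // S mS.
    case: (classic (same_set S N0)) => [e|n1]; first by left.
    case: (classic (same_set S L)) => [e|n2]; first by right.
    exfalso.
    have d1 : forall x, S x -> N0 x -> x = 0.
      by move=> x a b; apply: NNPP => nx; apply: n1; apply: min_inter a b nx.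
    have d2 : forall x, S x -> L x -> x = 0.
      by move=> x a b; apply: NNPP => nx; apply: n2; apply: min_inter a b nx.
    have [hS nzS _] := mS.
    have [x [[b [c [Nb Lc ->]]] Sx nx]] := lg S hS nzS.
    have Sb := comult_trick hc hS hN0 hL disj Sx Nb Lc.
    have b0 := d1 b Sb Nb.
    move: Sx nx; rewrite b0 add0r => Sc nc.
    by apply: nc; apply: d2.
  + exists (qT N0); exists (piL hN0); split.
    * exact: pi_surj.
    * exact: pi_ker.
    * exact: (proj1 (quot_ok emp m1 m2 disj (@pi_surj _ _ _ hN0) (pi_ker hN0))).
    * exact: (proj2 (quot_ok emp m1 m2 disj (@pi_surj _ _ _ hN0) (pi_ker hN0))).
  + exists (qT L); exists (piL hL); split.
    * exact: pi_surj.
    * exact: pi_ker.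
    * exact: (proj1 (quot_ok emp m2 m1 disj' (@pi_surj _ _ _ hL) (pi_ker hL))).
    * exact: (proj2 (quot_ok emp m2 m1 disj' (@pi_surj _ _ _ hL) (pi_ker hL))).
- move=> [S1 [S2 [[m1 m2 ns _] [X1 [f1 [_ k1 u1 _]]] [X2 [f2 [_ k2 u2 _]]]]]].
  exact: (back_empty m1 m2 ns k1 k2 u1 u2 hc).
Qed.
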